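(* Let $\mathcal{G}$ be a connected undirected graph with $n$ nodes and $m$ edges and incidence matrix $B\in\mathbb{R}^{n\times m}$, let $p\ge 1$, $E=\begin{bmatrix} I_{p}\\ \mathbf{0}_{(n-p)\times p}\end{bmatrix}$, $d\in\mathbb{R}^n$, $Q=\operatorname{diag}(q_1,\dots,q_p)$ with all $q_i>0$, $r\in\mathbb{R}^p$, $s\in\mathbb{R}$, and $C(u)=\frac12 u^TQu+r^Tu+s$. Consider the optimization problem $$\min_{u\in\mathbb{R}^p,\ \lambda\in\mathbb{R}^m} C(u)\quad\text{subject to}\quad \mathbf{0}=-B\lambda+Eu-d.$$ Its solution (in the variable $u$) is given by $\overline u=Q^{-1}(\kappa-r)$, where $$\kappa=E^T\frac{\mathbb{1}_n\mathbb{1}_n^T}{\mathbb{1}_p^TQ^{-1}\mathbb{1}_p}\,(d+EQ^{-1}r).$$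
   Context: $\mathbb{1}_k$ denotes the all-ones vector of length $k$. The incidence matrix $B=(b_{ik})$ is obtained by arbitrarily orienting each edge and setting $b_{ik}=+1$ if node $i$ is the positive end of edge $k$, $-1$ if it is the negative end, and $0$ otherwise. *)

(* Defs.v *)
From HB Require Import structures.
From mathcomp Require Import all_boot all_order all_algebra.
Set Implicit Arguments. Unset Strict Implicit. Unset Printing Implicit Defensive.
Import Order.TTheory GRing.Theory Num.Theory.
Local Open Scope ring_scope.

(* A graph on nodes 'I_n with m edges; edge k is oriented from (ends k).1
   (positive end) to (ends k).2 (negative end). *)
Definition graph_adj (n m : nat) (ends : 'I_m -> 'I_n * 'I_n) : rel 'I_n :=
  fun x y => [exists k, (ends k == (x, y)) || (ends k == (y, x))].

Definition incidence (R : ringType) (n m : nat) (ends : 'I_m -> 'I_n * 'I_n)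
  : 'M[R]_(n, m) :=
  \matrix_(i < n, k < m)
    (if i == (ends k).1 then 1 else if i == (ends k).2 then -1 else 0).

Definition selE (R : ringType) (n p : nat) : 'M[R]_(n, p) :=
  \matrix_(i < n, j < p) ((i : nat) == (j : nat))%:R.

Definition cost (R : fieldType) (p : nat) (Q : 'M[R]_p) (r : 'cV[R]_p) (s : R)
  (u : 'cV[R]_p) : R :=
  2^-1 * (u^T *m Q *m u) 0 0 + (r^T *m u) 0 0 + s.

(* Main.v *)
Require Import Defs.
From HB Require Import structures.
From mathcomp Require Import all_boot all_order all_algebra.
From mathcomp Require Import ring lra.
Import Order.TTheory GRing.Theory Num.Theory.
Local Open Scope ring_scope.

Lemma invQE (R : fieldType) p (q : 'rV[R]_p) (Hq : forall j, q 0 j != 0)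
  (w : 'cV[R]_p) j : (invmx (diag_mx q) *m w) j 0 = (q 0 j)^-1 * w j 0.
Proof.
have U : diag_mx q \in unitmx.
  by rewrite unitmxE det_diag unitfE; apply/prodf_neq0 => i _; exact: Hq.
rewrite {1}(_ : w = diag_mx q *m (diag_mx (\row_j (q 0 j)^-1) *m w)); last first.
  by apply/matrixP => i k; rewrite !mul_diag_mx !mxE mulrA mulfV ?mul1r.
by rewrite mulKmx // mul_diag_mx !mxE.
Qed.

Lemma sum_sel1 (R : ringType) n p (Hpn : (p <= n)%N) (j : 'I_p) (g : 'I_n -> R) :
  \sum_(i < n) ((i : nat) == (j : nat))%:R * g i = g (widen_ord Hpn j).
Proof.
rewrite (bigD1 (widen_ord Hpn j)) //= eqxx mul1r big1 ?addr0 // => i Hi.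
rewrite (_ : ((i : nat) == j) = false) ?mul0r //; apply/negbTE.
by apply: contra Hi => /eqP H; apply/eqP/val_inj.
Qed.

Lemma sum_sel0 (R : ringType) n p (Hpn : (p <= n)%N) (j : 'I_p) :
  \sum_(i < n) ((i : nat) == (j : nat))%:R = 1 :> R.
Proof.
rewrite (eq_bigr (fun i : 'I_n => ((i:nat)==j)%:R * 1)); last by move=> i _; rewrite mulr1.
exact: (@sum_sel1 R n p Hpn j (fun _ => 1)).
Qed.

Lemma sum_selE (R : ringType) n p (Hpn : (p <= n)%N) (v : 'cV[R]_p) :
  \sum_(i < n) (selE R n p *m v) i 0 = \sum_(j < p) v j 0.
Proof.
under eq_bigr do rewrite mxE.
rewrite exchange_big /=; apply: eq_bigr => j _.
under eq_bigr do rewrite mxE.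
by rewrite (@sum_sel1 _ n p Hpn j (fun _ => v j 0)).
Qed.

Section Rg.
Variables (R : fieldType) (n m : nat) (ends : 'I_m -> 'I_n * 'I_n).
Hypothesis Hloop : forall k, (ends k).1 != (ends k).2.
Hypothesis Hconn : forall x y : 'I_n, connect (graph_adj ends) x y.

Definition Rg (x : 'cV[R]_n) := exists lam, x = incidence R ends *m lam.

Lemma Rg0 : Rg 0. Proof. by exists 0; rewrite mulmx0. Qed.
Lemma RgD x y : Rg x -> Rg y -> Rg (x + y).
Proof. by move=> [a ->] [b ->]; exists (a + b); rewrite mulmxDr. Qed.
Lemma RgZ c x : Rg x -> Rg (c *: x).
Proof. by move=> [a ->]; exists (c *: a); rewrite scalemxAr. Qed.
Lemma RgN {x} : Rg x -> Rg (- x).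
Proof. by move=> H; rewrite -scaleN1r; apply: RgZ. Qed.

Definition dl (i : 'I_n) : 'cV[R]_n := delta_mx i 0.

Lemma Rg_edge k : Rg (dl (ends k).1 - dl (ends k).2).
Proof.
exists (delta_mx k 0); apply/matrixP => i j.
rewrite !mxE (bigD1 k) //= big1 ?addr0; last first.
  by move=> l /negbTE Hl; rewrite !mxE Hl mulr0.
rewrite !mxE !eqxx /= (ord1 j) eqxx !andbT mulr1.
case Ha: (i == (ends k).1); case Hb: (i == (ends k).2);
  rewrite /= ?subr0 ?sub0r ?subrr //.
by move: (Hloop k); rewrite -(eqP Ha) -(eqP Hb) eqxx.
Qed.

Lemma Rg_adj x y : graph_adj ends x y -> Rg (dl x - dl y).
Proof.
move=> /existsP [k /orP [/eqP H | /eqP H]].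
  by have := Rg_edge k; rewrite H.
by have := RgN (Rg_edge k); rewrite H /= opprB.
Qed.

Lemma Rg_conn x y : Rg (dl x - dl y).
Proof.
have /connectP [s Hs ->] := Hconn x y.
elim: s x Hs => [|z s IH] x /=.
  by move=> _; rewrite subrr; exact: Rg0.
move=> /andP [Ha Hs].
have -> : dl x - dl (last z s) = (dl x - dl z) + (dl z - dl (last z s)).
  by rewrite addrA subrK.
by apply: RgD; [exact: Rg_adj | exact: IH].
Qed.

Lemma Rg_sum0 (x : 'cV[R]_n) (o : 'I_n) : \sum_i x i 0 = 0 -> Rg x.
Proof.
move=> Hs.
have -> : x = \sum_i x i 0 *: (dl i - dl o).
  rewrite (eq_bigr (fun i => x i 0 *: dl i - x i 0 *: dl o)); last first.
    by move=> i _; rewrite scalerBr.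
  rewrite sumrB -scaler_suml Hs scale0r subr0.
  apply/matrixP => i j; rewrite (ord1 j) summxE.
  rewrite (bigD1 i) //= big1 ?addr0; last first.
    by move=> l /negbTE Hl; rewrite !mxE eq_sym Hl mulr0.
  by rewrite !mxE !eqxx mulr1.
apply: (big_ind Rg); [exact: Rg0 | exact: RgD |].
by move=> i _; apply: RgZ; exact: Rg_conn.
Qed.

Lemma colsumB (lam : 'cV[R]_m) : \sum_i (incidence R ends *m lam) i 0 = 0.
Proof.
under eq_bigr do rewrite mxE.
rewrite exchange_big /= big1 // => k _.
rewrite -mulr_suml; apply/eqP; rewrite mulf_eq0; apply/orP; left; apply/eqP.
rewrite (bigD1 (ends k).1) //= (bigD1 (ends k).2) ?(Hloop k) 1?eq_sym //=.
rewrite big1; last first.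
  by move=> i /andP [H1 H2]; rewrite mxE (negbTE H1) (negbTE H2).
rewrite !mxE eqxx eq_sym (negbTE (Hloop k)) eqxx addr0.
by rewrite subrr.
Qed.
End Rg.

Lemma entry_sub (R : ringType) a b (A B : 'M[R]_(a, b)) i j : (A - B) i j = A i j - B i j.
Proof. by rewrite !mxE. Qed.

Theorem lemma3 (R : realFieldType) (n m p : nat)
  (ends : 'I_m -> 'I_n * 'I_n)
  (Hloop : forall k, (ends k).1 != (ends k).2)
  (Hsimple : forall k l, ends k = ends l \/ ends k = ((ends l).2, (ends l).1) -> k = l)
  (Hconn : forall x y : 'I_n, connect (graph_adj ends) x y)
  (Hp : (1 <= p)%N) (Hpn : (p <= n)%N)
  (d : 'cV[R]_n) (q : 'rV[R]_p) (Hq : forall j, 0 < q 0 j)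
  (r : 'cV[R]_p) (s : R) :
  let B : 'M[R]_(n, m) := incidence R ends in
  let E : 'M[R]_(n, p) := selE R n p in
  let Q : 'M[R]_p := diag_mx q in
  let C := cost Q r s in
  let kappa : 'cV[R]_p :=
    (((const_mx 1 : 'rV[R]_p) *m invmx Q *m (const_mx 1 : 'cV[R]_p)) 0 0)^-1 *:
      (E^T *m ((const_mx 1 : 'cV[R]_n) *m (const_mx 1 : 'rV[R]_n))
           *m (d + E *m invmx Q *m r)) in
  let ubar := invmx Q *m (kappa - r) in
  (exists lam : 'cV[R]_m, 0 = - (B *m lam) + E *m ubar - d) /\
  (forall (u : 'cV[R]_p) (lam : 'cV[R]_m),
      0 = - (B *m lam) + E *m u - d -> C ubar <= C u) /\
  (forall (u : 'cV[R]_p) (lam : 'cV[R]_m),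
      0 = - (B *m lam) + E *m u - d -> C u <= C ubar -> u = ubar).
Proof.
move=> B E Q C kappa ubar.
have Hq0 : forall j, q 0 j != 0 by move=> j; rewrite gt_eqF.
pose a j := (q 0 j)^-1.
have Ha : forall j, 0 < a j by move=> j; rewrite invr_gt0.
pose o : 'I_p := Ordinal Hp.
pose SA := \sum_j a j.
have HSA : 0 < SA.
  rewrite /SA (bigD1 o) //=.
  have : 0 <= \sum_(i < p | i != o) a i by apply: sumr_ge0 => i _; exact: ltW.
  have := Ha o; lra.
pose K := (\sum_i d i 0 + \sum_j a j * r j 0) / SA.
have kapE : forall j, kappa j 0 = K.
  move=> j; rewrite /kappa mxE -mulmxA mxE.
  rewrite [X in X^-1 * _](_ : _ = SA); last first.
    by apply: eq_bigr => j0 _; rewrite mxE mul1r invQE // mxE mulr1.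
  rewrite -mulmxA mxE.
  under eq_bigr do rewrite !mxE.
  under eq_bigr => i _ do under eq_bigr => k _ do rewrite mxE big_ord1 !mxE mul1r mul1r.
  rewrite -mulr_suml (@sum_sel0 _ n p Hpn j) mul1r.
  rewrite big_split /=.
  rewrite [X in _ + X](_ : _ = \sum_(i < n) (E *m (invmx Q *m r)) i 0); last first.
    by apply: eq_bigr => i _; rewrite mulmxA mxE.
  rewrite sum_selE //.
  under [X in _ + X]eq_bigr do rewrite invQE //.
  by rewrite mulrC.
have ubE : forall j, ubar j 0 = a j * (K - r j 0).
  by move=> j; rewrite /ubar invQE // entry_sub kapE.
have costE : forall u : 'cV[R]_p,
    C u = 2^-1 * (\sum_j q 0 j * u j 0 ^+ 2) + \sum_j r j 0 * u j 0 + s.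
  move=> u; rewrite /C /cost -mulmxA /Q mul_diag_mx !mxE.
  congr (2^-1 * _ + _ + _); apply: eq_bigr => j _; rewrite !mxE //.
  by rewrite mulrCA expr2.
have feas1 : forall u lam, 0 = - (B *m lam) + E *m u - d ->
    \sum_j u j 0 = \sum_i d i 0.
  move=> u lam /eqP; rewrite eq_sym -addrA addrC subr_eq0 => /eqP H.
  have := @colsumB R n m ends Hloop lam.
  rewrite -/B -H.
  under eq_bigr do rewrite entry_sub.
  by rewrite sumrB sum_selE // => /eqP; rewrite subr_eq0 => /eqP.
have feas2 : forall u : 'cV[R]_p, \sum_j u j 0 = \sum_i d i 0 ->
    exists lam, 0 = - (B *m lam) + E *m u - d.
  move=> u Hs.
  have [lam Hl] : @Rg R n m ends (E *m u - d).
    apply: (@Rg_sum0 R n m ends Hloop Hconn _ (widen_ord Hpn o)).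
    under eq_bigr do rewrite entry_sub.
    by rewrite sumrB sum_selE // Hs subrr.
  by exists lam; rewrite -addrA Hl addNr.
have sumub : \sum_j ubar j 0 = \sum_i d i 0.
  under eq_bigr do rewrite ubE mulrBr.
  rewrite sumrB -mulr_suml -/SA /K mulrC divfK ?gt_eqF //.
  by rewrite addrK.
have key : forall u : 'cV[R]_p, \sum_j u j 0 = \sum_i d i 0 ->
    C u - C ubar = 2^-1 * \sum_j q 0 j * (u j 0 - ubar j 0) ^+ 2.
  move=> u Hs.
  have per : forall j,
      (2^-1 * (q 0 j * u j 0 ^+ 2) + r j 0 * u j 0)
      - (2^-1 * (q 0 j * ubar j 0 ^+ 2) + r j 0 * ubar j 0)
      - 2^-1 * (q 0 j * (u j 0 - ubar j 0) ^+ 2)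
      = K * (u j 0 - ubar j 0).
    move=> j; rewrite ubE /a; field; exact: Hq0.
  have H0 : \sum_j ((2^-1 * (q 0 j * u j 0 ^+ 2) + r j 0 * u j 0)
      - (2^-1 * (q 0 j * ubar j 0 ^+ 2) + r j 0 * ubar j 0)
      - 2^-1 * (q 0 j * (u j 0 - ubar j 0) ^+ 2))
      = \sum_j K * (u j 0 - ubar j 0).
    by apply: eq_bigr => j _; exact: per.
  rewrite -mulr_sumr !sumrB Hs sumub subrr mulr0 !big_split /= -!mulr_sumr in H0.
  rewrite !costE; lra.
split; first exact: feas2.
split.
  move=> u lam /feas1 /key Hk; rewrite -subr_ge0 Hk.
  apply: mulr_ge0; first by rewrite invr_ge0 ler0n.
  by apply: sumr_ge0 => j _; apply: mulr_ge0; [exact: ltW | exact: sqr_ge0].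
move=> u lam /feas1 /key Hk Hle.
have Hs0 : \sum_j q 0 j * (u j 0 - ubar j 0) ^+ 2 = 0.
  have Hge : 0 <= \sum_j q 0 j * (u j 0 - ubar j 0) ^+ 2.
    by apply: sumr_ge0 => j _; apply: mulr_ge0; [exact: ltW | exact: sqr_ge0].
  have : C u - C ubar <= 0 by rewrite subr_le0.
  rewrite Hk; move: Hge; set S := \sum_j _ => Hge H.
  have h2 : (0 : R) < 2^-1 by rewrite invr_gt0 ltr0n.
  nra.
apply/matrixP => j k; rewrite (ord1 k); apply/eqP; rewrite -subr_eq0 -sqrf_eq0.
have Hnn : forall i : 'I_p, true -> 0 <= q 0 i * (u i 0 - ubar i 0) ^+ 2.
  by move=> i _; apply: mulr_ge0; [exact: ltW | exact: sqr_ge0].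
have Hz := psumr_eq0P Hnn Hs0.
have := Hz j isT.
by move/eqP; rewrite mulf_eq0 (negbTE (Hq0 j)).
Qed.
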